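(* Let $X$ be a topological space, $Y$ an Alexandroff space and $f:X\to Y$ a continuous surjection. Then for any join-preserving $\nabla_Y:\mathcal{O}(Y)\to\mathcal{O}(Y)$ and any valuation $V$ of the variables in $\mathcal{O}(Y)$, there exist a join-preserving $\nabla_X:\mathcal{O}(X)\to\mathcal{O}(X)$ and a valuation $U$ of the variables in $\mathcal{O}(X)$ such that for every sequent $\Gamma\Rightarrow A$, $(\mathcal{O}(X),\nabla_X,U)\vDash\Gamma\Rightarrow A$ iff $(\mathcal{O}(Y),\nabla_Y,V)\vDash\Gamma\Rightarrow A$. Moreover, for each class $\mathcal{C}\in\{i\mathbf{ST}(F),i\mathbf{ST}(wF)\}$, if $(\mathcal{O}(Y),\nabla_Y)\in\mathcal{C}$ then $(\mathcal{O}(X),\nabla_X)\in\mathcal{C}$. Consequently, for such $\mathcal{C}$, if $X\vDash_{\mathcal{C}}\Gamma\Rightarrow A$ then $Y\vDash_{\mathcal{C}}\Gamma\Rightarrow A$.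
   Context: $\mathcal{O}(Z)$ is the locale of opens of a space $Z$; a space is Alexandroff if arbitrary intersections of opens are open. Formulas of $\mathcal{L}_\nabla$ are built from variables and constants $1,\top,\bot$ by $\wedge,\vee,\otimes,\to$ and unary $\nabla$; sequents are $\Gamma\Rightarrow A$ with $\Gamma$ a finite sequence. For a join-preserving $\nabla$ on $\mathcal{O}(Z)$ (a spacetime $(\mathcal{O}(Z),\nabla)$), the implication is $W_1\to W_2=\Box(W_1\Rightarrow W_2)$ with $\Box$ the right adjoint of $\nabla$ and $\Rightarrow$ the Heyting implication of $\mathcal{O}(Z)$ (equivalently $W_1\cap\nabla W_2\subseteq W_3$ iff $W_2\subseteq W_1\to W_3$). A valuation of variables extends to all formulas by $1,\top\mapsto Z$, $\bot\mapsto\emptyset$, $\wedge,\otimes\mapsto\cap$, $\vee\mapsto\cup$, $\nabla\mapsto\nabla$, $\to\mapsto\to$; $(\mathcal{O}(Z),\nabla,V)\vDash\gamma_1,\dots,\gamma_n\Rightarrow A$ iff $V(\gamma_1)\cap\dots\cap V(\gamma_n)\subseteq V(A)$ (empty intersection $=Z$). $i\mathbf{ST}(F)$ is the class of such spacetimes with $W\subseteq\nabla W$ for all $W$; $i\mathbf{ST}(wF)$ those with $\nabla W=\emptyset\Rightarrow W=\emptyset$. $Z\vDash_{\mathcal{C}}\Gamma\Rightarrow A$ means $(\mathcal{O}(Z),\nabla,V)\vDash\Gamma\Rightarrow A$ for all $\nabla$ with $(\mathcal{O}(Z),\nabla)\in\mathcal{C}$ and all valuations $V$. *)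

(* Defs.v *)
From HB Require Import structures.
From mathcomp Require Import all_boot all_order.
From mathcomp Require Import all_classical all_reals all_analysis.
Set Implicit Arguments. Unset Strict Implicit. Unset Printing Implicit Defensive.
Local Open Scope classical_set_scope.

Inductive form : Type :=
| fvar : nat -> form
| fone : form
| ftop : form
| fbot : form
| fand : form -> form -> form
| for_ : form -> form -> form
| ftens : form -> form -> form
| fimp : form -> form -> form
| fnabla : form -> form.

Definition sequent := (seq form * form)%type.

Section Spacetime.
Variable Z : topologicalType.

Definition alexandroff : Prop :=
  forall S : set (set Z), (forall W, S W -> open W) -> open (\bigcap_(W in S) W).

(* nabla : O(Z) -> O(Z) join-preserving (arbitrary joins of opens);
   only its values on open sets matter. *)
Definition is_spacetime (nabla : set Z -> set Z) : Prop :=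
  (forall W, open W -> open (nabla W)) /\
  (forall S : set (set Z), (forall W, S W -> open W) ->
     nabla (\bigcup_(W in S) W) = \bigcup_(W in S) nabla W).

(* right adjoint of nabla on O(Z) *)
Definition box (nabla : set Z -> set Z) (W : set Z) : set Z :=
  \bigcup_(U in [set U | open U /\ nabla U `<=` W]) U.

Definition himp (W1 W2 : set Z) : set Z :=
  \bigcup_(U in [set U | open U /\ U `&` W1 `<=` W2]) U.

Definition arrow (nabla : set Z -> set Z) (W1 W2 : set Z) : set Z :=
  box nabla (himp W1 W2).

Definition valuation (V : nat -> set Z) : Prop := forall n, open (V n).

Fixpoint eval (nabla : set Z -> set Z) (V : nat -> set Z) (A : form) : set Z :=
  match A with
  | fvar n => V n
  | fone => setT
  | ftop => setT
  | fbot => set0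
  | fand B C => eval nabla V B `&` eval nabla V C
  | for_ B C => eval nabla V B `|` eval nabla V C
  | ftens B C => eval nabla V B `&` eval nabla V C
  | fimp B C => arrow nabla (eval nabla V B) (eval nabla V C)
  | fnabla B => nabla (eval nabla V B)
  end.

Definition sat (nabla : set Z -> set Z) (V : nat -> set Z) (s : sequent) : Prop :=
  foldr (fun g acc => eval nabla V g `&` acc) setT s.1 `<=` eval nabla V s.2.

Inductive stclass : Type := cF | cwF.

Definition in_class (C : stclass) (nabla : set Z -> set Z) : Prop :=
  is_spacetime nabla /\
  match C with
  | cF => forall W, open W -> W `<=` nabla W
  | cwF => forall W, open W -> nabla W = set0 -> W = set0
  end.

Definition valid (C : stclass) (s : sequent) : Prop :=
  forall nabla, in_class C nabla ->
  forall V, valuation V -> sat nabla V s.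

End Spacetime.

(* Main.v *)
Require Import Defs.
From mathcomp Require Import all_boot all_order.
From mathcomp Require Import all_classical all_reals all_analysis.
Local Open Scope classical_set_scope.

Lemma nabla_mono {Z : topologicalType} {nabla : set Z -> set Z} {W W' : set Z} :
  is_spacetime nabla -> open W -> open W' -> W `<=` W' -> nabla W `<=` nabla W'.
Proof.
move=> [_ hj] oW oW' sW.
have e : W' = \bigcup_(O in [set O | O = W \/ O = W']) O.
  apply/seteqP; split => x.
    by move=> w; exists W' => //; right.
  by move=> [Q [-> | ->] Qx] //; apply: sW.
move=> x nx; rewrite e hj; last by move=> O [-> | ->].
by exists W => //; left.
Qed.

Lemma arrow_open {Z : topologicalType} {nabla : set Z -> set Z} {A B} :
  open (arrow nabla A B).
Proof. by apply: bigcup_open => ? []. Qed.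

Lemma arrowP {Z : topologicalType} {nabla : set Z -> set Z} (A B : set Z) {W : set Z} :
  is_spacetime nabla -> open W ->
  (W `<=` arrow nabla A B <-> A `&` nabla W `<=` B).
Proof.
move=> hs oW; have [ho hj] := hs; split.
  move=> h x [Ax nWx].
  have := nabla_mono hs oW arrow_open h _ nWx.
  rewrite /arrow /box hj; last by move=> ? [].
  move=> [U [oU sU] nUx].
  have [U' [oU' sU'] U'x] := sU x nUx.
  by apply: sU'.
move=> h x Wx; exists W => //; split => //.
move=> z nz; exists (nabla W) => //; split; first exact: ho.
by move=> y [ny Ay]; apply: h.
Qed.

Definition gY {X Y : topologicalType} (f : X -> Y) (W : set X) : set Y :=
  \bigcap_(O in [set O : set Y | open O /\ f @` W `<=` O]) O.

Lemma g_open {X Y : topologicalType} (f : X -> Y) W :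
  alexandroff Y -> open (gY f W).
Proof. by move=> aY; apply: aY => O []. Qed.

Lemma g_unit {X Y : topologicalType} {f : X -> Y} {W} :
  W `<=` f @^-1` (gY f W).
Proof. by move=> x Wx O [_ hO]; apply: hO; exists x. Qed.

Lemma g_le {X Y : topologicalType} {f : X -> Y} {W O} :
  open O -> f @` W `<=` O -> gY f W `<=` O.
Proof. by move=> oO hO y gy; apply: gy. Qed.

Lemma g_mono {X Y : topologicalType} {f : X -> Y} {W W'} :
  W `<=` W' -> gY f W `<=` gY f W'.
Proof.
move=> sW y gy O [oO h]; apply: gy; split => //.
by move=> z [x Wx <-]; apply: h; exists x => //; apply: sW.
Qed.

Lemma g_pre {X Y : topologicalType} {f : X -> Y} {O} :
  (forall y : Y, exists x : X, f x = y) -> open O -> gY f (f @^-1` O) = O.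
Proof.
move=> fs oO; apply/seteqP; split.
  by apply: g_le => // y [x Ox <-].
move=> y Oy O' [_ h]; have [x fx] := fs y; subst y; apply: h.
by exists x.
Qed.

Lemma pre_sub {X Y : topologicalType} {f : X -> Y} {P Q : set Y} :
  (forall y : Y, exists x : X, f x = y) ->
  (f @^-1` P `<=` f @^-1` Q <-> P `<=` Q).
Proof.
move=> fs; split; last by move=> h x; apply: h.
by move=> h y Py; have [x fx] := fs y; subst y; apply: h.
Qed.

Definition nablaX {X Y : topologicalType} (f : X -> Y) (nablaY : set Y -> set Y)
  (W : set X) : set X := f @^-1` (nablaY (gY f W)).

Lemma eval_open {Y : topologicalType} {nablaY : set Y -> set Y} {V : nat -> set Y} A :
  is_spacetime nablaY -> valuation V -> open (Defs.eval nablaY V A).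
Proof.
move=> [ho hj] hV; elim: A => //=.
- exact: openT.
- exact: openT.
- exact: open0.
- by move=> B hB C hC; apply: openI.
- by move=> B hB C hC; apply: openU.
- by move=> B hB C hC; apply: openI.
- by move=> B _ C _; apply: arrow_open.
- by move=> B hB; apply: ho.
Qed.

Lemma nablaX_spacetime {X Y : topologicalType} {f : X -> Y} {nablaY} :
  alexandroff Y -> continuous f -> is_spacetime nablaY ->
  is_spacetime (nablaX f nablaY).
Proof.
move=> aY fc [ho hj]; split.
  by move=> W _; apply/(continuousP f).1 => //; apply: ho; apply: g_open.
move=> S _.
have e : gY f (\bigcup_(W in S) W) = \bigcup_(O in gY f @` S) O.
  apply/seteqP; split.
    apply: g_le; first by apply: bigcup_open => ? [W _ <-]; apply: g_open.
    move=> y [x [W SW Wx] <-]; exists (gY f W); first by exists W.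
    exact: g_unit.
  move=> y [Q [W SW <-] gy]; apply: g_mono gy.
  by move=> x Wx; exists W.
rewrite /nablaX e hj; last by move=> ? [W _ <-]; apply: g_open.
apply/seteqP; split => x /=.
  by move=> [Q [W SW <-] h]; exists W.
by move=> [W SW h]; exists (gY f W) => //; exists W.
Qed.

Lemma arrow_transfer {X Y : topologicalType} {f : X -> Y} {nablaY} {A B : set Y} :
  alexandroff Y -> continuous f -> (forall y : Y, exists x : X, f x = y) ->
  is_spacetime nablaY -> open A -> open B ->
  arrow (nablaX f nablaY) (f @^-1` A) (f @^-1` B) = f @^-1` arrow nablaY A B.
Proof.
move=> aY fc fs hY oA oB.
have hX := nablaX_spacetime aY fc hY.
apply/seteqP; split.
  move=> x hx.
  have hW := (arrowP (f @^-1` A) (f @^-1` B) hX arrow_open).1 (@subset_refl _ _).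
  have h2 : A `&` nablaY (gY f (arrow (nablaX f nablaY) (f @^-1` A) (f @^-1` B))) `<=` B.
    by move=> y [Ay ny]; have [x0 fx0] := fs y; subst y; apply: (hW x0).
  have h3 := (arrowP A B hY (g_open _ _ aY)).2 h2.
  by apply: h3; apply: g_unit.
move=> x hx.
have oW : open (f @^-1` arrow nablaY A B).
  by apply/(continuousP f).1 => //; apply: arrow_open.
apply: ((arrowP (f @^-1` A) (f @^-1` B) hX oW).2) hx.
move=> z [Az nz]; move: nz; rewrite /nablaX g_pre //; last exact: arrow_open.
move=> nz.
exact: ((arrowP A B hY arrow_open).1 (@subset_refl _ _) (f z) (conj Az nz)).
Qed.

Lemma eval_transfer {X Y : topologicalType} {f : X -> Y} {nablaY} {V} A :
  alexandroff Y -> continuous f -> (forall y : Y, exists x : X, f x = y) ->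
  is_spacetime nablaY -> valuation V ->
  Defs.eval (nablaX f nablaY) (fun n => f @^-1` V n) A = f @^-1` Defs.eval nablaY V A.
Proof.
move=> aY fc fs hY hV; elim: A => //=.
- by move=> B -> C ->.
- by move=> B -> C ->.
- by move=> B -> C ->.
- move=> B -> C ->; apply: arrow_transfer => //; exact: eval_open.
- by move=> B ->; rewrite /nablaX g_pre //; exact: eval_open.
Qed.

Theorem theorem8p10 (X Y : topologicalType) (f : X -> Y) :
  alexandroff Y -> continuous f -> (forall y : Y, exists x : X, f x = y) ->
  (forall (nablaY : set Y -> set Y) (V : nat -> set Y),
     is_spacetime nablaY -> valuation V ->
     exists (nablaX : set X -> set X) (U : nat -> set X),
       is_spacetime nablaX /\ valuation U /\
       (forall s : sequent, sat nablaX U s <-> sat nablaY V s) /\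
       (forall C : stclass, in_class C nablaY -> in_class C nablaX))
  /\
  (forall (C : stclass) (s : sequent), valid X C s -> valid Y C s).
Proof.
move=> aY fc fs.
have P1 : forall (nablaY : set Y -> set Y) (V : nat -> set Y),
     is_spacetime nablaY -> valuation V ->
     exists (nablaX : set X -> set X) (U : nat -> set X),
       is_spacetime nablaX /\ valuation U /\
       (forall s : sequent, sat nablaX U s <-> sat nablaY V s) /\
       (forall C : stclass, in_class C nablaY -> in_class C nablaX).
  move=> nY V hY hV.
  have hX := nablaX_spacetime aY fc hY.
  exists (nablaX f nY), (fun n => f @^-1` V n); split => //; split.
    by move=> n; apply/(continuousP f).1 => //; apply: hV.
  split.
    move=> [G A]; rewrite /sat /=.
    have -> : foldr (fun g acc => Defs.eval (nablaX f nY) (fun n => f @^-1` V n) g `&` acc)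
       setT G = f @^-1` foldr (fun g acc => Defs.eval nY V g `&` acc) setT G.
      elim: G => //= g G ->; by rewrite (eval_transfer _ aY fc fs hY hV).
    rewrite (eval_transfer _ aY fc fs hY hV); exact: pre_sub.
  move=> [] [_ h]; split => //.
    move=> W oW x Wx; apply: h; [exact: g_open | exact: g_unit].
  move=> W oW e.
  have e2 : gY f W = set0.
    apply: h; first exact: g_open.
    apply/seteqP; split => // y ny; have [x0 fx0] := fs y; subst y.
    have : nablaX f nY W x0 by [].
    by rewrite e.
  apply/seteqP; split => // x Wx.
  by have := @g_unit _ _ f W x Wx; rewrite /preimage e2.
split; first exact: P1.
move=> C s hv nY hC V hV.
have [nX [U [_ [hU [hs hc]]]]] := P1 nY V (proj1 hC) hV.
apply: (proj1 (hs s)).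
exact: (hv nX (hc C hC) U hU).
Qed.
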